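(* For every $q\ge2$, $\beta>0$, every odd integer $L$ and every finite $d$-dimensional cube $V\subset\mathbb{Z}^d$, $\lambda(\boldsymbol{I}_{\rm SW})\ge\lambda(\boldsymbol{I}_\mathcal{D})$.
   Context: Potts measure with free boundary on $G=(V,E)$: $\pi(\sigma)\propto\exp(\beta\,\#\{(u,v)\in E:\sigma(u)=\sigma(v)\})$; $p=1-e^{-\beta}$. Tilings: for $x\in\{0,\dots,L+2\}^d$, $C(x)$ is the union over $h\in\mathbb{Z}^d$ of the cubes $\{y:\|y-(x+(L+3)h)\|_\infty\le(L-1)/2\}$; $B_x=C(x)\cap V$, listed as $\mathcal{D}=\{B_1,\dots,B_m\}$, $m=(L+3)^d$. Isolated vertices dynamics $\boldsymbol{I}_{\rm SW}$: from $\sigma_t$, include each edge with equal endpoint spins independently with probability $p$ to get $A_t$; give each isolated vertex of $(V,A_t)$ an independent uniform spin in $\{1,\dots,q\}$; discard edges. Isolated vertices tiled dynamics $\boldsymbol{I}_\mathcal{D}$: same first step; then pick $k\in\{1,\dots,m\}$ uniformly and give an independent uniform spin only to each isolated vertex of $(V,A_t)$ lying in $B_k$; discard edges. $\lambda(P)=1-\max\{|\lambda_2|,|\lambda_N|\}$ for reversible $P$. *)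

(* Defs.v *)
From HB Require Import structures.
From mathcomp Require Import all_boot all_order all_algebra.
From Stdlib Require Import ClassicalEpsilon.
Set Implicit Arguments. Unset Strict Implicit. Unset Printing Implicit Defensive.
Import Order.TTheory GRing.Theory Num.Theory.
Local Open Scope ring_scope.

Definition decP (P : Prop) : bool :=
  if excluded_middle_informative P then true else false.

(* Vertices of the cube V = a + {0,...,n-1}^d (offset a only matters for the
   tiling); a vertex is stored by its position y relative to the corner a. *)
Definition vert (n d : nat) := {ffun 'I_d -> 'I_n}.

Definition adj (n d : nat) (u v : vert n d) : bool :=
  [exists i : 'I_d, [&& (((u i).+1 == v i) || ((v i).+1 == u i))%N &
                        [forall j : 'I_d, (j != i) ==> (u j == v j)]]].

Definition edges (n d : nat) : {set {set vert n d}} :=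
  [set e | [exists u : vert n d, exists v : vert n d, adj u v && (e == [set u; v])]].

Definition config (q n d : nat) := {ffun vert n d -> 'I_q}.

Definition eq_edges (q n d : nat) (s : config q n d) : {set {set vert n d}} :=
  [set e in edges n d | [forall u in e, forall v in e, s u == s v]].

Definition isolated (n d : nat) (A : {set {set vert n d}}) (v : vert n d) : bool :=
  [forall e in A, v \notin e].

(* Probability that percolation step from s produces A (A a subset of eq_edges s). *)
Definition perc_w (R : nzRingType) (p : R) (q n d : nat) (s : config q n d)
  (A : {set {set vert n d}}) : R :=
  p ^+ #|A| * (1 - p) ^+ (#|eq_edges s| - #|A|).

(* Probability of getting t from s when the vertices of W receive independent
   uniform spins and all other vertices keep their spin. *)
Definition resample (R : unitRingType) (q n d : nat) (s t : config q n d)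
  (W : {set vert n d}) : R :=
  if [forall v, (v \notin W) ==> (t v == s v)] then (q%:R ^- #|W|) else 0.

Definition K_SW (R : unitRingType) (p : R) (q n d : nat) (s t : config q n d) : R :=
  \sum_(A in powerset (eq_edges s))
     @perc_w R p q n d s A * @resample R q n d s t [set v | isolated A v].

Definition tile_idx (L d : nat) := {ffun 'I_d -> 'I_(L + 3)}.

Definition inC (L d : nat) (x : tile_idx L d) (y : 'I_d -> int) : Prop :=
  exists h : 'I_d -> int, forall i : 'I_d,
    `| y i - ((x i)%:Z + (L + 3)%:Z * h i) | <= ((L.-1)./2)%:Z.

Definition tile (L n d : nat) (a : 'I_d -> int) (x : tile_idx L d) : {set vert n d} :=
  [set v : vert n d | decP (inC x (fun i => a i + (v i)%:Z))].

Definition K_D (R : unitRingType) (p : R) (q n d L : nat) (a : 'I_d -> int)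
  (s t : config q n d) : R :=
  (#|{: tile_idx L d}|%:R)^-1 *
  \sum_(x : tile_idx L d) \sum_(A in powerset (eq_edges s))
     @perc_w R p q n d s A * @resample R q n d s t ([set v | isolated A v] :&: tile n a x).

Definition kmx (R : nzRingType) (S : finType) (K : S -> S -> R) : 'M[R]_#|{: S}| :=
  \matrix_(i, j) K (enum_val i) (enum_val j).

(* g = lambda(P) = 1 - max(|lambda_2|, |lambda_N|), where
   lambda_1 >= lambda_2 >= ... >= lambda_N are the eigenvalues of P
   (roots of the characteristic polynomial, with multiplicity). *)
Definition spectral_gap (R : rcfType) (N : nat) (P : 'M[R]_N) (g : R) : Prop :=
  exists s : seq R,
    [/\ sorted >=%R s,
        char_poly P = \prod_(x <- s) ('X - x%:P) &
        g = 1 - Num.max `|s`_1| `|s`_(N.-1)| ].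

(* Main.v *)
Require Import Defs.
From HB Require Import structures.
From mathcomp Require Import all_boot all_order all_algebra.
From mathcomp Require Import spectral sesquilinear.
From mathcomp.real_closed Require Import complex.
From mathcomp Require Import ring.
Set Implicit Arguments. Unset Strict Implicit. Unset Printing Implicit Defensive.
Import Order.TTheory GRing.Theory Num.Theory.
Local Open Scope ring_scope.


Section Spec.
Variable R : rcfType.
Local Notation C := (R[i]).
Local Notation toC := (real_complex R).

Definition mC m n (M : 'M[R]_(m, n)) : 'M[C]_(m, n) := map_mx toC M.
Definition ct m n (M : 'M[C]_(m, n)) : 'M[C]_(n, m) := map_mx Num.conj (trmx M).
Definition qf N (M : 'M[R]_N) (z : 'rV[C]_N) : C := (z *m mC M *m ct z) 0 0.
Definition psd N (M : 'M[R]_N) := forall z, 0 <= qf M z.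

Lemma toC_real (x : R) : toC x \is Num.real.
Proof. by apply/complex_realP; exists x. Qed.

Lemma conj_toC (x : R) : (toC x)^* = toC x.
Proof. exact: conj_Creal (toC_real x). Qed.

Lemma ct_mC m n (M : 'M[R]_(m, n)) : ct (mC M) = mC M^T.
Proof. by apply/matrixP=> i j; rewrite !mxE conj_toC. Qed.

Lemma ct_mul m n k (A : 'M[C]_(m, n)) (B : 'M[C]_(n, k)) : ct (A *m B) = ct B *m ct A.
Proof. by rewrite /ct trmx_mul map_mxM. Qed.

Lemma ctK m n (A : 'M[C]_(m, n)) : ct (ct A) = A.
Proof. exact: trmxCK. Qed.

Lemma qfD N (A B : 'M[R]_N) z : qf (A + B) z = qf A z + qf B z.
Proof. by rewrite /qf /mC map_mxD mulmxDr mulmxDl mxE. Qed.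

Lemma qfN N (A : 'M[R]_N) z : qf (- A) z = - qf A z.
Proof. by rewrite /qf /mC map_mxN mulmxN mulNmx mxE. Qed.

Lemma qfB N (A B : 'M[R]_N) z : qf (A - B) z = qf A z - qf B z.
Proof. by rewrite qfD qfN. Qed.

Lemma qfZ N (a : R) (A : 'M[R]_N) z : qf (a *: A) z = toC a * qf A z.
Proof.
rewrite /qf /mC map_mxZ -scalemxAr -scalemxAl mxE //.
Qed.

Lemma qf_sum N I (r : seq I) (P : pred I) (F : I -> 'M[R]_N) z :
  qf (\sum_(i <- r | P i) F i) z = \sum_(i <- r | P i) qf (F i) z.
Proof.
elim/big_rec2: _ => [|i y M _ <-]; last by rewrite qfD.
by rewrite /qf /mC map_mx0 mulmx0 mul0mx mxE.
Qed.

Lemma qf_congr N k (Y : 'M[R]_(k, N)) (M : 'M[R]_k) z :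
  qf (Y^T *m M *m Y) z = qf M (z *m mC Y^T).
Proof.
rewrite /qf /mC !map_mxM ct_mul ct_mC trmxK !mulmxA.
by [].
Qed.

Lemma psd1 N : psd (1%:M : 'M[R]_N).
Proof.
move=> z; rewrite /qf /mC map_mx1 mulmx1 mxE sumr_ge0 // => i _.
by rewrite !mxE mul_conjC_ge0.
Qed.

Lemma psd_congr N k (Y : 'M[R]_(k, N)) (M : 'M[R]_k) :
  psd M -> psd (Y^T *m M *m Y).
Proof. by move=> PM z; rewrite qf_congr. Qed.

Lemma psdTT N k (X : 'M[R]_(k, N)) : psd (X^T *m X).
Proof. by have := psd_congr X (@psd1 k); rewrite mulmx1. Qed.

Lemma psdD N (A B : 'M[R]_N) : psd A -> psd B -> psd (A + B).
Proof. by move=> PA PB z; rewrite qfD addr_ge0. Qed.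

Lemma psdZ N a (A : 'M[R]_N) : 0 <= a -> psd A -> psd (a *: A).
Proof. by move=> a0 PA z; rewrite qfZ mulr_ge0 // ler0c. Qed.

Lemma psd_sum N I (r : seq I) (P : pred I) (F : I -> 'M[R]_N) :
  (forall i, P i -> psd (F i)) -> psd (\sum_(i <- r | P i) F i).
Proof.
move=> H z; rewrite qf_sum sumr_ge0 // => i Pi; exact: H.
Qed.

End Spec.


Lemma char_poly_sim (F : comUnitRingType) n (P A : 'M[F]_n) :
  P \in unitmx -> char_poly (invmx P *m A *m P) = char_poly A.
Proof.
move=> Pu; rewrite /char_poly.
set Q := map_mx polyC P; set Qi := map_mx polyC (invmx P).
have QiQ : Qi *m Q = 1%:M by rewrite -map_mxM mulVmx // map_mx1.
have -> : char_poly_mx (invmx P *m A *m P) = Qi *m char_poly_mx A *m Q.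
  rewrite /char_poly_mx mulmxBr mulmxBl !map_mxM -/Q -/Qi.
  congr (_ - _); by rewrite -mulmxA -scalar_mxC mulmxA QiQ mul1mx.
by rewrite !det_mulmx mulrC mulrA -det_mulmx (mulmx1C QiQ) det1 mul1r.
Qed.

Section Decomp.
Variable R : rcfType.
Local Notation C := (R[i]).
Local Notation toC := (real_complex R).

Lemma spec_decomp N (M : 'M[R]_N) : M^T = M ->
  exists (U : 'M[C]_N) (dr : 'I_N -> R),
  [/\ U *m ct U = 1%:M, ct U *m U = 1%:M,
     forall z, qf M z = \sum_k toC (dr k) * ((z *m ct U) 0 k * ((z *m ct U) 0 k)^*) &
     char_poly M = \prod_(k < N) ('X - (dr k)%:P)].
Proof.
move=> MT.
have herm : mC M \is hermsymmx.
  apply/is_hermitianmxP; rewrite expr0 scale1r.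
  by have := ct_mC M; rewrite MT /ct => ->.
have /orthomx_spectralP eqM := hermitian_normalmx herm.
set U := spectralmx (mC M) in eqM; set d := spectral_diag (mC M) in eqM.
have Uu : U \is unitarymx := spectral_unitarymx _.
rewrite invmx_unitary // in eqM.
have UUt : U *m ct U = 1%:M by apply/unitarymxP.
have UtU : ct U *m U = 1%:M := mulmx1C UUt.
have /mxOverP dre := hermitian_spectral_diag_real herm.
pose dr k := complex.Re (d 0 k).
have dE k : d 0 k = toC (dr k) by rewrite /dr RRe_real // dre.
exists U, dr; split => //.
- move=> z; rewrite /qf eqM.
  have -> : z *m (ct U *m diag_mx d *m U) *m ct z
      = (z *m ct U) *m diag_mx d *m ct (z *m ct U).
    by rewrite ct_mul ctK !mulmxA.
  rewrite mxE; apply: eq_bigr => k _.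
  by rewrite mul_mx_diag !mxE dE mulrCA mulrA.
- apply: (map_poly_inj toC).
  rewrite map_char_poly -/(mC M) eqM -invmx_unitary // char_poly_sim ?unitarymx_unit //.
  rewrite char_poly_trig ?diag_mx_is_trig // rmorph_prod; apply: eq_bigr => k _.
  by rewrite rmorphB /= map_polyX map_polyC /= mxE eqxx mulr1n dE.
Qed.
End Decomp.


Section Sorting.
Variable R : rcfType.

Lemma geR_trans : transitive (>=%R : rel R).
Proof. by move=> y x z /= h1 h2; apply: le_trans h2 h1. Qed.
Lemma geR_refl : reflexive (>=%R : rel R).
Proof. by move=> x /=. Qed.

Lemma sort_facts N (dr : 'I_N -> R) : (1 < N)%N ->
  let idx := sort (fun i j : 'I_N => dr j <= dr i) (enum 'I_N) in
  let s := map dr idx in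
  [/\ sorted >=%R s, \prod_(k < N) ('X - (dr k)%:P) = \prod_(x <- s) ('X - x%:P),
     size s = N, (forall x, x \in s -> exists k, x = dr k) &
     exists i1 i2, [/\ i1 != i2, dr i1 = s`_0, dr i2 = s`_1 &
        forall k, k != i1 -> dr k <= s`_1]].
Proof.
move=> hN idx s.
have szi : size idx = N by rewrite size_sort size_enum_ord.
have szs : size s = N by rewrite size_map.
have srt : sorted >=%R s.
  rewrite sorted_map; apply: sort_sorted => i j /=; exact: le_total.
have ui : uniq idx by rewrite sort_uniq enum_uniq.
have i0 : 'I_N by exists 0%N; apply: ltnW.
have snth m : (m < N)%N -> s`_m = dr (nth i0 idx m).
  by move=> hm; rewrite (nth_map i0) ?szi.
split => //.
- rewrite big_map -big_enum /=; apply: perm_big.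
  by rewrite perm_sym /idx perm_sort.
- by move=> x /mapP [k _ ->]; exists k.
exists (nth i0 idx 0), (nth i0 idx 1); split.
- by rewrite nth_uniq // szi // ltnW.
- by rewrite snth // ltnW.
- by rewrite snth.
move=> k hk.
have kin : k \in idx by rewrite mem_sort mem_enum.
set m := index k idx.
have hm : (m < N)%N by rewrite -szi index_mem.
have m0 : m != 0%N.
  by apply: contra hk => /eqP m0; rewrite -m0 /m nth_index.
have := sorted_leq_nth geR_trans geR_refl 0 srt.
move=> /(_ 1%N m); rewrite !inE szs => /(_ hN hm); rewrite lt0n m0 => /(_ isT).
by rewrite /= snth // /m nth_index.
Qed.
End Sorting.


Section CF.
Variable R : rcfType.
Local Notation C := (R[i]).
Local Notation toC := (real_complex R).

Lemma toC_le (x y : R) : (toC x <= toC y) = (x <= y).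
Proof. exact: lecR. Qed.

Lemma nrm_coord N (U : 'M[C]_N) (z : 'rV[C]_N) : ct U *m U = 1%:M ->
  (z *m ct z) 0 0 = \sum_k ((z *m ct U) 0 k * ((z *m ct U) 0 k)^*).
Proof.
move=> h; have -> : z *m ct z = (z *m ct U) *m ct (z *m ct U).
  by rewrite ct_mul ctK mulmxA -(mulmxA z) h mulmx1.
by rewrite mxE; apply: eq_bigr => k _; rewrite !mxE.
Qed.

Lemma sum_ge_term (I : finType) (F : I -> C) i :
  (forall j, 0 <= F j) -> F i <= \sum_j F j.
Proof.
move=> h; rewrite (bigD1 i) //= lerDl sumr_ge0 // => j _; exact: h.
Qed.

Lemma psd_dr N (M : 'M[R]_N) (U : 'M[C]_N) (dr : 'I_N -> R) :
  U *m ct U = 1%:M ->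
  (forall z, qf M z = \sum_k toC (dr k) * ((z *m ct U) 0 k * ((z *m ct U) 0 k)^*)) ->
  psd M -> forall k, 0 <= dr k.
Proof.
move=> h1 hq P k; have := P (delta_mx 0 k *m U).
rewrite hq -mulmxA h1 mulmx1 (bigD1 k) //= big1 ?addr0; last first.
  by move=> j hj; rewrite mxE (negbTE hj) andbF /=; rewrite !mul0r mulr0.
by rewrite !mxE !eqxx /= conjC1 !mulr1 -(rmorph0 toC) toC_le.
Qed.


Lemma lambda2_le N (A B : 'M[R]_N) (UA UB : 'M[C]_N) (drA drB : 'I_N -> R)
  (lA lB : R) (i1 i2 j1 : 'I_N) :
  UA *m ct UA = 1%:M -> ct UA *m UA = 1%:M -> ct UB *m UB = 1%:M ->
  (forall z, qf A z = \sum_k toC (drA k) * ((z *m ct UA) 0 k * ((z *m ct UA) 0 k)^*)) ->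
  (forall z, qf B z = \sum_k toC (drB k) * ((z *m ct UB) 0 k * ((z *m ct UB) 0 k)^*)) ->
  psd (B - A) -> i1 != i2 -> lA <= drA i1 -> lA <= drA i2 ->
  (forall k, k != j1 -> drB k <= lB) -> lA <= lB.
Proof.
move=> hA1 hA2 hB2 qA qB PBA i12 hi1 hi2 hj1.
have i21 : i2 != i1 by rewrite eq_sym.
pose W := UA *m ct UB.
pose a0 := W i2 j1; pose b0 := - W i1 j1.
pose a := if (a0 == 0) && (b0 == 0) then 1 else a0.
pose b := if (a0 == 0) && (b0 == 0) then 0 else b0.
have ab0 : (a != 0) || (b != 0).
  rewrite /a /b; case: ifP => [_|]; first by rewrite oner_eq0.
  by move/negbT; rewrite negb_and.
have abW : a * W i1 j1 + b * W i2 j1 = 0.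
  rewrite /a /b; case: ifP => [/andP [_ /eqP h]|_].
    by rewrite mul1r mul0r addr0; apply/eqP; rewrite -oppr_eq0; apply/eqP.
  by rewrite /a0 /b0 mulrC mulNr addrN.
pose cA : 'rV[C]_N := \row_k (if k == i1 then a else if k == i2 then b else 0).
pose z := cA *m UA.
have zA : z *m ct UA = cA by rewrite -mulmxA hA1 mulmx1.
have zB : (z *m ct UB) 0 j1 = 0.
  rewrite -mulmxA -/W mxE (bigD1 i1) //= (bigD1 i2) /=; last by rewrite eq_sym.
  rewrite big1 ?addr0; last first.
    by move=> k /andP [h2 h1]; rewrite mxE (negbTE h1) (negbTE h2) mul0r.
  rewrite /cA !mxE eqxx (negbTE i21) eqxx; move: abW; rewrite /W !mxE; exact.
pose n := (z *m ct z) 0 0.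
have nA := nrm_coord z hA2; have nB := nrm_coord z hB2.
rewrite -/n zA in nA; rewrite -/n in nB.
have npos : 0 < n.
  have sg i := @sum_ge_term _ (fun k => cA 0 k * (cA 0 k)^*) i (fun j => mul_conjC_ge0 _).
  rewrite nA; case/orP: ab0 => hab.
    by apply: lt_le_trans (sg i1); rewrite mxE eqxx mul_conjC_gt0.
  by apply: lt_le_trans (sg i2); rewrite mxE (negbTE i21) eqxx mul_conjC_gt0.
have low : toC lA * n <= qf A z.
  rewrite qA zA nA mulr_sumr; apply: ler_sum => k _.
  have [-> | k1] := eqVneq k i1.
    by apply: ler_wpM2r; [exact: mul_conjC_ge0 | rewrite toC_le].
  have [-> | k2] := eqVneq k i2.
    by apply: ler_wpM2r; [exact: mul_conjC_ge0 | rewrite toC_le].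
  by rewrite /cA mxE (negbTE k1) (negbTE k2) mul0r !mulr0.
have up : qf B z <= toC lB * n.
  rewrite qB nB mulr_sumr; apply: ler_sum => k _.
  have [-> | hk] := eqVneq k j1; first by rewrite zB conjC0 !mulr0.
  by apply: ler_wpM2r; [exact: mul_conjC_ge0 | rewrite toC_le hj1].
have AB : qf A z <= qf B z by rewrite -subr_ge0 -qfB; exact: PBA.
rewrite -toC_le -(ler_pM2r npos); apply: le_trans low (le_trans AB up).
Qed.


Lemma gap_max (s : seq R) N : (1 < N)%N -> size s = N -> sorted >=%R s ->
  (forall x, x \in s -> 0 <= x) ->
  Num.max `|s`_1| `|s`_(N.-1)| = s`_1 /\ s`_1 <= s`_0.
Proof.
move=> hN sz srt nn.
have h1 : 0 <= s`_1 by apply: nn; rewrite mem_nth // sz.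
have hN1 : 0 <= s`_(N.-1) by apply: nn; rewrite mem_nth // sz; case: (N) hN.
have le := sorted_leq_nth ge_trans ge_refl 0 srt.
have hl : s`_(N.-1) <= s`_1.
  move: le; case: N hN sz {hN1} => [|[|n]] // _ sz le.
  by apply: le; rewrite ?inE ?sz.
split; last by have := le 0%N 1%N; rewrite !inE sz; apply => //; apply: ltnW.
by rewrite !ger0_norm // max_l.
Qed.

Lemma cf_main N (A B : 'M[R]_N) : (1 < N)%N -> A^T = A -> B^T = B -> psd A -> psd (B - A) ->
  exists gA gB, [/\ spectral_gap A gA, spectral_gap B gB & gB <= gA].
Proof.
move=> hN AT BT PA PBA.
have [UA [drA [A1 A2 qA cpA]]] := spec_decomp AT.
have [UB [drB [B1 B2 qB cpB]]] := spec_decomp BT.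
have PB : psd B by rewrite -(subrK A B); apply: psdD.
have nnA := psd_dr A1 qA PA; have nnB := psd_dr B1 qB PB.
have [srtA cpsA szA memA [i1 [i2 [i12 e1 e2 hk]]]] := sort_facts drA hN.
have [srtB cpsB szB memB [j1 [j2 [_ f1 f2 hjk]]]] := sort_facts drB hN.
set sA := map drA _ in srtA cpsA szA memA e1 e2 hk.
set sB := map drB _ in srtB cpsB szB memB f1 f2 hjk.
have nA x : x \in sA -> 0 <= x by move=> /memA [k ->].
have nB x : x \in sB -> 0 <= x by move=> /memB [k ->].
have [mA leA] := gap_max hN szA srtA nA.
have [mB leB] := gap_max hN szB srtB nB.
exists (1 - sA`_1), (1 - sB`_1); split.
- by exists sA; split => //; [rewrite cpA cpsA | rewrite mA].
- by exists sB; split => //; [rewrite cpB cpsB | rewrite mB].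
rewrite lerD2l lerN2.
apply: (lambda2_le A1 A2 B2 qA qB PBA i12 (j1 := j1)).
- by rewrite e1.
- by rewrite e2.
- exact: hjk.
Qed.

End CF.


Section Prob.
Variable R : rcfType.
Variables (q n d : nat) (p : R).
Hypothesis hq : (2 <= q)%N.
Hypothesis hp : 0 < p < 1.

Local Notation V := (vert n d).
Local Notation T := (config q n d).
Local Notation ES := {set {set V}}.

Definition cw (A : ES) : R := (p / (1 - p)) ^+ #|A|.
Definition ww (s : T) : R := (1 - p)^-1 ^+ #|eq_edges s|.
Definition II (A : ES) : {set V} := [set v | isolated A v].

Lemma up0 : 1 - p != 0.
Proof. by case/andP: hp => _ h; rewrite subr_eq0 eq_sym lt_eqF. Qed.

Lemma cw_ge0 A : 0 <= cw A.
Proof. by case/andP: hp => h0 h1; rewrite exprn_ge0 // divr_ge0 ?subr_ge0 ?ltW. Qed.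

Lemma ww_gt0 s : 0 < ww s.
Proof. by case/andP: hp => h0 h1; rewrite exprn_gt0 // invr_gt0 subr_gt0. Qed.

Lemma perc_c (s : T) (A : ES) : A \subset eq_edges s -> ww s * perc_w p s A = cw A.
Proof.
move=> sub; rewrite /ww /perc_w /cw.
have le := subset_leq_card sub.
set e := #|eq_edges s|; set k := #|A|.
have hu := up0.
have -> : (1 - p)^-1 ^+ e = ((1 - p) ^+ (e - k) * (1 - p) ^+ k)^-1.
  by rewrite -exprD subnK // exprVn.
have h1 : (1 - p) ^+ (e - k) != 0 by rewrite expf_neq0.
have h2 : (1 - p) ^+ k != 0 by rewrite expf_neq0.
rewrite expr_div_n.
move: h1 h2; set X := (1 - p) ^+ (e - k); set Y := (1 - p) ^+ k.
by move=> h1 h2; rewrite invfM (mulrC X^-1) -mulrA (mulrCA X^-1) mulVf // mulr1 mulrC.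
Qed.

Lemma res_cond (s t : T) (W : {set V}) : resample R s t W != 0 ->
  forall v, v \notin W -> t v = s v.
Proof.
rewrite /resample; case: ifP => [/forallP h _ v vW|]; last by rewrite eqxx.
by have /implyP/(_ vW)/eqP := h v.
Qed.

Lemma eq_t (s t : T) (A : ES) (W : {set V}) : A \subset eq_edges s -> W \subset II A ->
  (forall v, v \notin W -> t v = s v) -> A \subset eq_edges t.
Proof.
move=> sA sW ht; apply/subsetP => e eA.
have := subsetP sA e eA; rewrite !inE => /andP [eE /forallP h].
rewrite eE /=; apply/forallP => u; apply/implyP => ue; apply/forallP => v; apply/implyP => ve.
have nI x : x \in e -> x \notin W.
  move=> xe; apply/negP => /(subsetP sW); rewrite inE => /forallP /(_ e).
  by rewrite eA xe.
rewrite (ht u (nI u ue)) (ht v (nI v ve)).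
by have /implyP/(_ ue)/forallP/(_ v)/implyP/(_ ve) := h u.
Qed.

Lemma key (s t : T) (W : ES -> {set V}) : (forall A, W A \subset II A) ->
  ww s * \sum_(A in powerset (eq_edges s)) perc_w p s A * resample R s t (W A)
  = \sum_(A : ES) cw A * (A \subset eq_edges s)%:R * (A \subset eq_edges t)%:R
                   * resample R s t (W A).
Proof.
move=> hW; rewrite mulr_sumr big_mkcond /=; apply: eq_bigr => A _.
rewrite powersetE; case: ifP => sA; last by rewrite mulr0 mul0r mul0r.
have [r0|rn0] := eqVneq (resample R s t (W A)) 0; first by rewrite r0 !mulr0.
rewrite (eq_t sA (hW A) (res_cond rn0)) mulrA perc_c //.
by rewrite !mulr1.
Qed.

End Prob.


Section Prod.
Variable R : numFieldType.
Variables (q n d : nat).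
Hypothesis hq : (2 <= q)%N.
Local Notation V := (vert n d).
Local Notation T := (config q n d).

Lemma prod_bool (I : finType) (b : I -> bool) :
  \prod_i ((b i)%:R : R) = ([forall i, b i])%:R.
Proof.
case: (boolP [forall i, b i]) => [/forallP h|/forallPn [i hi]].
  by rewrite big1 // => i _; rewrite h.
by rewrite (bigD1 i) //= (negbTE hi) mul0r.
Qed.

Lemma sum_pred1 (x : 'I_q) : \sum_(c : 'I_q) ((x == c)%:R : R) = 1.
Proof.
rewrite (bigD1 x) //= eqxx big1 ?addr0 // => c hc.
by rewrite eq_sym (negbTE hc).
Qed.

Lemma res_prod (s t : T) (W U : {set V}) :
  \sum_(u : T) resample R s u W * resample R u t U = resample R s t (W :|: U).
Proof.
pose g v (c : 'I_q) : R := (((v \in W) || (c == s v)) && ((v \in U) || (t v == c)))%:R.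
have e1 u : resample R s u W * resample R u t U
           = (q%:R ^- #|W| * q%:R ^- #|U|) * \prod_v g v (u v).
  rewrite /g prod_bool /resample.
  case: (boolP [forall v, _ ==> (u v == s v)]) => h1;
  case: (boolP [forall v, _ ==> (t v == u v)]) => h2.
  - rewrite (_ : [forall v, _] = true) ?mulr1 //; apply/forallP => v.
    by rewrite -!implyNb; apply/andP; split; [exact: forallP h1 v | exact: forallP h2 v].
  - rewrite (_ : [forall v, _] = false) ?mulr0 //; apply/negbTE.
    by apply: contra h2 => /forallP h; apply/forallP => v; rewrite implyNb; case/andP: (h v).
  - rewrite (_ : [forall v, _] = false) ?mulr0 ?mul0r //; apply/negbTE.
    by apply: contra h1 => /forallP h; apply/forallP => v; rewrite implyNb; case/andP: (h v).
  - rewrite (_ : [forall v, _] = false) ?mulr0 ?mul0r //; apply/negbTE.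
    by apply: contra h1 => /forallP h; apply/forallP => v; rewrite implyNb; case/andP: (h v).
rewrite (eq_bigr _ (fun u _ => e1 u)) -mulr_sumr.
rewrite -(bigA_distr_bigA (fun v c => g v c)) /=.
have e2 v : \sum_c g v c = (if v \in W :&: U then q%:R else 1)
                           * ((v \in W :|: U) || (s v == t v))%:R.
  rewrite /g !inE; case: (v \in W); case: (v \in U) => /=.
  - by rewrite mulr1 sumr_const card_ord.
  - by rewrite mul1r sum_pred1.
  - by rewrite mul1r (eq_bigr (fun c => (s v == c)%:R)) ?sum_pred1 // => c _; rewrite eq_sym andbT.
  - rewrite mul1r; case: eqP => [->|ne].
      by rewrite (eq_bigr (fun c => (t v == c)%:R)) ?sum_pred1 // => c _; rewrite [c == _]eq_sym andbb.
    rewrite big1 // => c _; case: eqP => [e|]; last by [].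
    by case: eqP => // e'; case: ne; rewrite -e e'.
rewrite (eq_bigr _ (fun v _ => e2 v)) big_split /= -big_mkcond prodr_const prod_bool.
rewrite /resample.
have -> : [forall v, (v \in W :|: U) || (s v == t v)]
        = [forall v, (v \notin W :|: U) ==> (t v == s v)].
  by apply: eq_forallb => v; rewrite implyNb eq_sym.
case: ifP => _ /=; last by rewrite mulr0n !mulr0.
have q0 : (q%:R : R) != 0 by rewrite pnatr_eq0 -lt0n (leq_trans _ hq).
have E : (q%:R : R) ^+ #|W| * q%:R ^+ #|U| = q%:R ^+ #|W :|: U| * q%:R ^+ #|W :&: U|.
  by rewrite -!exprD cardsUI.
by rewrite mulr1 -invfM E invfM -mulrA mulVf ?mulr1 // expf_neq0.
Qed.
End Prod.


Section Mx.
Variable R : rcfType.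
Variables (q n d : nat) (p : R).
Hypothesis hq : (2 <= q)%N.
Hypothesis hp : 0 < p < 1.

Local Notation V := (vert n d).
Local Notation T := (config q n d).
Local Notation ES := {set {set V}}.
Local Notation N := #|{: T}|.

Definition ev (i : 'I_N) : T := enum_val i.
Definition Pm (W : {set V}) : 'M[R]_N := \matrix_(i, j) resample R (ev i) (ev j) W.

Lemma sum_ev (F : T -> R) : \sum_(k < N) F (ev k) = \sum_(u : T) F u.
Proof. by rewrite (big_enum_val F). Qed.

Lemma PmM W U : Pm W *m Pm U = Pm (W :|: U).
Proof.
apply/matrixP => i j; rewrite !mxE -(res_prod _ hq).
rewrite -(sum_ev (fun u => resample R (ev i) u W * resample R u (ev j) U)).
by apply: eq_bigr => k _; rewrite !mxE.
Qed.

Lemma res_sym (s t : T) W : resample R s t W = resample R t s W.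
Proof.
rewrite /resample; congr (if _ then _ else _).
by apply: eq_forallb => v; rewrite eq_sym.
Qed.

Lemma PmT W : (Pm W)^T = Pm W.
Proof. by apply/matrixP => i j; rewrite !mxE res_sym. Qed.

Lemma Pm_psd W : psd (Pm W).
Proof. by have := psdTT (Pm W); rewrite PmT PmM setUid. Qed.

Lemma Pm_diff (J I : {set V}) : J \subset I -> psd (Pm J - Pm I).
Proof.
move=> JI; have := psdTT (Pm J - Pm I).
have -> : (Pm J - Pm I)^T = Pm J - Pm I by rewrite linearB /= !PmT.
rewrite mulmxBl !mulmxBr !PmM !setUid (setUidPr JI) (setUidPl JI).
by rewrite subrr subr0.
Qed.


Definition sq (i : 'I_N) : R := Num.sqrt (ww p (ev i)).
Definition Ds : 'M[R]_N := diag_mx (\row_i sq i).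
Definition Di : 'M[R]_N := diag_mx (\row_i (sq i)^-1).

Lemma sq_gt0 i : 0 < sq i.
Proof. by rewrite sqrtr_gt0 ww_gt0. Qed.

Lemma sq_sq i : sq i * sq i = ww p (ev i).
Proof. by rewrite -expr2 sqr_sqrtr // ltW // ww_gt0. Qed.

Lemma DsDi : Ds *m Di = 1%:M.
Proof.
apply/matrixP => i j; rewrite mul_diag_mx !mxE.
case: eqP => [->|_]; last by rewrite mulr0.
by rewrite mulfV // gt_eqF // sq_gt0.
Qed.

Lemma Di_unit : Di \in unitmx.
Proof. by case: (mulmx1_unit DsDi). Qed.

Lemma invDi : invmx Di = Ds.
Proof.
have h := mulmx1C DsDi.
by rewrite -[RHS](mulKmx Di_unit) h mulmx1.
Qed.

Definition Sm (M : 'M[R]_N) := invmx Di *m M *m Di.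

Lemma Sm_entry M i j : Sm M i j = sq i * M i j * (sq j)^-1.
Proof. by rewrite /Sm invDi mul_mx_diag mul_diag_mx !mxE. Qed.

Definition Y (A : ES) : 'M[R]_N :=
  diag_mx (\row_i ((A \subset eq_edges (ev i))%:R * (sq i)^-1)).

Lemma YT A : (Y A)^T = Y A.
Proof. exact: tr_diag_mx. Qed.

Lemma YMY A M i j : (Y A *m M *m Y A) i j =
  ((A \subset eq_edges (ev i))%:R * (sq i)^-1) * M i j
   * ((A \subset eq_edges (ev j))%:R * (sq j)^-1).
Proof. by rewrite mul_mx_diag mul_diag_mx !mxE. Qed.

Lemma sq_mul_K i j (K : R) :
  sq i * K * (sq j)^-1 = (ww p (ev i) * K) * ((sq i)^-1 * (sq j)^-1).
Proof.
rewrite -sq_sq -!mulrA; congr (_ * _).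
by rewrite [RHS]mulrCA [sq i * _]mulrA mulfV ?mul1r // gt_eqF // sq_gt0.
Qed.

Lemma SSW_eq : Sm (kmx (@K_SW R p q n d))
   = \sum_(A : ES) cw p A *: (Y A *m Pm (II A) *m Y A).
Proof.
apply/matrixP => i j; rewrite Sm_entry summxE !mxE sq_mul_K.
rewrite /K_SW (@key _ _ _ _ _ hp _ _ (@II n d)) // mulr_suml; apply: eq_bigr => A _.
rewrite mxE YMY mxE /ev; ring.
Qed.

Lemma SD_eq L (a : 'I_d -> int) : Sm (kmx (@K_D R p q n d L a))
   = \sum_(A : ES) cw p A *: (Y A *m ((#|{: tile_idx L d}|%:R)^-1 *:
        \sum_(x : tile_idx L d) Pm (II A :&: tile n a x)) *m Y A).
Proof.
apply/matrixP => i j; rewrite Sm_entry summxE mxE sq_mul_K /K_D.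
set m1 := (#|{: tile_idx L d}|%:R)^-1.
have E : ww p (ev i) * (m1 * \sum_(x : tile_idx L d) \sum_(A in powerset (eq_edges (ev i)))
     perc_w p (ev i) A * resample R (ev i) (ev j) ([set v | isolated A v] :&: tile n a x))
   = m1 * \sum_(x : tile_idx L d) \sum_(A : ES) cw p A * (A \subset eq_edges (ev i))%:R
        * (A \subset eq_edges (ev j))%:R * resample R (ev i) (ev j) (II A :&: tile n a x).
  rewrite mulrCA mulr_sumr; congr (_ * _); apply: eq_bigr => x _.
  exact: (@key _ _ _ _ _ hp _ _ (fun A => II A :&: tile n a x) (fun A => subsetIl _ _)).
rewrite E.
rewrite exchange_big /= -mulrA mulr_suml mulr_sumr; apply: eq_bigr => A _.
rewrite mxE YMY mxE summxE.
rewrite !(mulr_sumr, mulr_suml); apply: eq_bigr => x _.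
rewrite !mxE /ev /II; ring.
Qed.

Lemma sym_sum (F : ES -> 'M[R]_N) (c : ES -> R) :
  (forall A, (F A)^T = F A) ->
  (\sum_A c A *: (Y A *m F A *m Y A))^T = \sum_A c A *: (Y A *m F A *m Y A).
Proof.
move=> hF; apply/matrixP => i j; rewrite mxE !summxE; apply: eq_bigr => A _.
rewrite ![((_ *: _ : 'M_N) _ _)]mxE !YMY.
have e : F A j i = F A i j by rewrite -[in LHS](hF A) mxE.
by rewrite e; ring.
Qed.

Lemma gap_Sm M g : spectral_gap (Sm M) g -> spectral_gap M g.
Proof. by rewrite /spectral_gap /Sm char_poly_sim // Di_unit. Qed.

Lemma N2 : (0 < n)%N -> (1 < N)%N.
Proof.
move=> hn.
have cV : (0 < #|{: V}|)%N by rewrite card_ffun card_ord expn_gt0 hn.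
rewrite card_ffun card_ord; apply: leq_trans hq _.
by rewrite -{1}(expn1 q) leq_pexp2l // (leq_trans _ hq).
Qed.


Lemma main_sec L (a : 'I_d -> int) : (0 < n)%N ->
  exists gSW gD : R,
    [/\ spectral_gap (kmx (@K_SW R p q n d)) gSW,
        spectral_gap (kmx (@K_D R p q n d L a)) gD &
        gD <= gSW].
Proof.
move=> hn.
have symSW : (Sm (kmx (@K_SW R p q n d)))^T = Sm (kmx (@K_SW R p q n d)).
  by rewrite SSW_eq sym_sum // => A; exact: PmT.
have symD : (Sm (kmx (@K_D R p q n d L a)))^T = Sm (kmx (@K_D R p q n d L a)).
  rewrite SD_eq sym_sum // => A.
  apply/matrixP => i j; rewrite !mxE !summxE; congr (_ * _); apply: eq_bigr => x _.
  by rewrite -[in LHS]PmT mxE.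
have psdSW : psd (Sm (kmx (@K_SW R p q n d))).
  rewrite SSW_eq; apply: psd_sum => A _; apply: psdZ; first exact: cw_ge0.
  by rewrite -{1}YT; apply: psd_congr; exact: Pm_psd.
have psdDiff : psd (Sm (kmx (@K_D R p q n d L a)) - Sm (kmx (@K_SW R p q n d))).
  rewrite SD_eq SSW_eq -sumrB; apply: psd_sum => A _; rewrite -scalerBr.
  apply: psdZ; first exact: cw_ge0.
  rewrite -mulmxBl -mulmxBr -{1}YT; apply: psd_congr.
  have m0 : (#|{: tile_idx L d}|%:R : R) != 0.
    rewrite pnatr_eq0 -lt0n; apply/card_gt0P.
    have h3 : (0 < L + 3)%N by rewrite addnS.
    by exists [ffun=> Ordinal h3].
  have -> : Pm (II A) = (#|{: tile_idx L d}|%:R)^-1 *: \sum_(x : tile_idx L d) Pm (II A).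
    by rewrite sumr_const -scaler_nat scalerA mulVf // scale1r.
  rewrite -scalerBr -sumrB; apply: psdZ; first by rewrite invr_ge0 ler0n.
  apply: psd_sum => x _; apply: Pm_diff; exact: subsetIl.
have [gA [gB [hA hB le]]] := cf_main (N2 hn) symSW symD psdSW psdDiff.
by exists gA, gB; split => //; apply: gap_Sm.
Qed.

End Mx.

Theorem mainTheorem9 (R : rcfType) (q : nat) (p : R) (L n d : nat) (a : 'I_d -> int) :
  (2 <= q)%N -> 0 < p < 1 -> odd L -> (0 < n)%N ->
  exists gSW gD : R,
    [/\ spectral_gap (kmx (@K_SW R p q n d)) gSW,
        spectral_gap (kmx (@K_D R p q n d L a)) gD &
        gD <= gSW].
Proof.
move=> hq hp _ hn; exact: main_sec.
Qed.
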